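(* Let $\lambda=(n_1,n_2)$ be a two-row shape with $n_1\ge n_2\ge 1$ and $n_1\ge 2$, and let $\rho$ be a density on $\lambda$ with positive entries $\rho_{1,j}=a_j$ ($1\le j\le n_1$) and $\rho_{2,j}=b_j$ ($1\le j\le n_2$); set $b_j=0$ for $n_2<j\le n_1$. Then $$|\mathrm{SVT}(\lambda,\rho)|=\sum_{(i_1,\dots,i_{n_1-1})\preceq(b_1,\dots,b_{n_1-1})}\ \prod_{j=1}^{n_1-1}\binom{a_{j+1}+i_j-1}{i_j},$$ where the sum ranges over all $(n_1-1)$-tuples of nonnegative integers $(i_1,\dots,i_{n_1-1})$ with $i_1+\dots+i_\ell\le b_1+\dots+b_\ell$ for every $1\le\ell\le n_1-1$.
   Context: A density on a shape $\lambda$ is an assignment of a nonnegative integer $\rho_{i,j}$ to every cell $(i,j)$ (row $i$, column $j$); let $N=\sum\rho_{i,j}$. A standard set-valued Young tableau of shape $\lambda$ and density $\rho$ assigns to each cell $(i,j)$ a set $S_{i,j}$ with $|S_{i,j}|=\rho_{i,j}$, the sets partitioning $[N]$, such that every element of $S_{i,j}$ is smaller than every element of $S_{i,j+1}$ and of $S_{i+1,j}$ whenever those cells exist. $\mathrm{SVT}(\lambda,\rho)$ is the set of these tableaux. For tuples of nonnegative integers, $\vec x\preceq\vec y$ means $x_1+\dots+x_\ell\le y_1+\dots+y_\ell$ for all $\ell$. *)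

(* Defs.v *)
From mathcomp Require Import all_boot.
Unset Printing Implicit Defensive.

(* A shape is a list of row lengths lam = [:: lam_1; lam_2; ...] (0-indexed here).
   Cell (i,j) (row i, column j, 0-indexed) lies in the shape iff j < lam_i. *)
Definition in_shape (lam : seq nat) (i j : nat) : bool := j < nth 0 lam i.

Definition cellT (lam : seq nat) : finType :=
  ('I_(size lam) * 'I_(nth 0 lam 0))%type.

(* A density is a function rho : row -> column -> nat (only values on cells matter).
   N = sum of rho over the cells of the shape. *)
Definition dens_total (lam : seq nat) (rho : nat -> nat -> nat) : nat :=
  \sum_(c : cellT lam | in_shape lam c.1 c.2) rho c.1 c.2.

(* A standard set-valued tableau: each element x of [N] = 'I_N is placed in the cell f x;
   S_c = f^-1(c). *)
Definition is_SVT (lam : seq nat) (rho : nat -> nat -> nat)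
    (f : {ffun 'I_(dens_total lam rho) -> cellT lam}) : bool :=
  [&& [forall x, in_shape lam (f x).1 (f x).2],
      [forall c : cellT lam, in_shape lam c.1 c.2 ==>
          (#|[set x | f x == c]| == rho c.1 c.2)],
      [forall x, forall y,
          (((f y).1 : nat) == (f x).1) && (((f y).2 : nat) == (f x).2 .+1) ==> (x < y)] &
      [forall x, forall y,
          (((f y).1 : nat) == (f x).1 .+1) && (((f y).2 : nat) == (f x).2) ==> (x < y)]].

Definition SVT_count (lam : seq nat) (rho : nat -> nat -> nat) : nat :=
  #|[pred f | @is_SVT lam rho f]|.

Definition dominated (m : nat) (x y : 'I_m -> nat) : bool :=
  [forall l : 'I_m, \sum_(k < m | k <= l) x k <= \sum_(k < m | k <= l) y k].

(* Main.v *)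
Require Import Defs.
From mathcomp Require Import all_boot.
Set Implicit Arguments. Unset Strict Implicit. Unset Printing Implicit Defensive.


Fixpoint allw (n : nat) : seq (seq bool) :=
  if n is n'.+1 then [seq false :: w | w <- allw n'] ++ [seq true :: w | w <- allw n']
  else [:: [::]].

Fixpoint okw (as_ cs : seq nat) (w : seq bool) {struct w} : bool :=
  match as_, w with
  | [::], _ => all id w
  | a :: as', [::] => false
  | a :: as', false :: w' =>
      if a <= 1 then okw as' (behead cs) w' else okw (a.-1 :: as') cs w'
  | a :: as', true :: w' => (0 < head 0 cs) && okw as_ (map predn cs) w'
  end.

Fixpoint G (as_ cs : seq nat) (q : nat) : nat :=
  if as_ is a :: as' then
    \sum_(i < (head 0 cs).+1) 'C(a.-1 + i, i) * G as' (map (subn^~ i) (behead cs)) (q - i)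
  else 1.

Lemma count_allw_all n : count (all id) (allw n) = 1.
Proof.
elim: n => [|n IH] //=.
by rewrite count_cat !count_map /= -IH (eq_count (a2 := pred0)) ?count_pred0.
Qed.

Lemma G_step a as' cs q : 0 < a ->
  G (a :: as') cs q =
  (if a <= 1 then G as' (behead cs) q else G (a.-1 :: as') cs q) +
  (if 0 < head 0 cs then G (a :: as') (map predn cs) q.-1 else 0).
Proof.
move=> a0 /=.
set c := head 0 cs; set cs' := behead cs.
have Hm : head 0 (map predn cs) = c.-1 /\ behead (map predn cs) = map predn cs'.
  by rewrite /c /cs'; case: (cs).
case: Hm => -> ->.
rewrite big_ord_recl /= bin0 mul1n subn0.
have E0 : map (subn^~ 0) cs' = cs' by elim: (cs') => //= x s ->; rewrite subn0.
have E1 j : map (subn^~ j) (map predn cs') = map (subn^~ j.+1) cs'.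
  by rewrite -map_comp; apply: eq_map => x /=; rewrite subnS -subn1 subnAC subn1.
have E2 j : q.-1 - j = q - j.+1 by rewrite subnS -subn1 subnAC subn1.
have Eb (i : 'I_c) : bump 0 i = i.+1 by rewrite /bump /= add1n.
case: ifP => a1.
- have -> : a = 1 by apply/eqP; rewrite eqn_leq a1.
  rewrite E0; congr (_ + _).
  case: ifP => c0.
  + rewrite prednK //; apply: eq_bigr => j _.
    by rewrite Eb /= !add0n !binn E1 E2.
  + move/negbT: c0; rewrite -leqNgt leqn0 => /eqP c0.
    by rewrite big1 // => i _; move: (ltn_ord i); rewrite {2}c0.
- rewrite [in RHS]big_ord_recl /= bin0 mul1n subn0 E0 -addnA; congr (_ + _).
  have a2 : a.-1 = (a.-2).+1 by rewrite prednK // -ltnS prednK // ltnNge a1.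
  case: ifP => c0.
  + rewrite prednK // -big_split /=; apply: eq_bigr => j _.
    rewrite Eb E1 E2 -mulnDl; congr (_ * _).
    by rewrite a2 addSn binS addnS addSn addnC.
  + move/negbT: c0; rewrite -leqNgt leqn0 => /eqP c0.
    by rewrite addn0; apply: eq_bigr => i _; move: (ltn_ord i); rewrite {2}c0.
Qed.

Lemma count_okw n as_ cs q :
  all (fun x => 0 < x) as_ -> all (fun x => x <= q) cs -> n = sumn as_ + q ->
  count (okw as_ cs) (allw n) = G as_ cs q.
Proof.
elim: n as_ cs q => [|n IH] as_ cs q.
  case: as_ => [|a as'] //= /andP[a0 _] _.
  by rewrite -addnA; case: a a0.
case: as_ => [|a as'] Hpos Hcs Hn.
  by rewrite (eq_count (a2 := all id)) ?count_allw_all //; case.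
rewrite G_step; last by case/andP: Hpos.
rewrite [allw _]/= count_cat !count_map.
case/andP: Hpos => a0 Hpos'.
congr (_ + _).
- rewrite (eq_count (a2 := if a <= 1 then okw as' (behead cs) else okw (a.-1 :: as') cs));
    last by move=> w /=; case: ifP.
  case: ifP => a1.
  + have a1' : a = 1 by apply/eqP; rewrite eqn_leq a1.
    apply: IH => //.
    * by case: (cs) Hcs => //= x s /andP[].
    * by move: Hn; rewrite /= a1' add1n addSn => -[].
  + apply: IH => //=.
    * by apply/andP; split; [rewrite -ltnS prednK // ltnNge a1 | exact: Hpos'].
    * by move: Hn; rewrite /= -(prednK a0) /= !addSn => -[].
- rewrite (eq_count (a2 := fun w => (0 < head 0 cs) && okw (a :: as') (map predn cs) w)) //.
  case: ifP => c0; last by rewrite (eq_count (a2 := pred0)) ?count_pred0 // => w /=; rewrite c0.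
  rewrite (eq_count (a2 := okw (a :: as') (map predn cs))); last by [].
  have q0 : 0 < q by case: (cs) Hcs c0 => //= x s /andP[xq _] x0; apply: leq_trans xq.
  apply: IH => //=.
  + by rewrite a0.
  + by rewrite all_map; apply: sub_all Hcs => x /= xq; rewrite -!subn1 leq_sub2r.
  + by apply/eqP; rewrite -eqSS Hn -addnS prednK.
Qed.

Lemma mem_allw n w : (w \in allw n) = (size w == n).
Proof.
elim: n w => [|n IH] w; first by case: w.
case: w => [|x w]; first by rewrite mem_cat; apply/negP => /orP[] /mapP [].
rewrite /= mem_cat.
case: x; rewrite eqSS -IH.
- apply/orP/idP => [[/mapP [w' _ //]|/mapP [w' H [->]] //]|H]; by right; apply: map_f.
- apply/orP/idP => [[/mapP [w' H [->]] //|/mapP [w' _ //]]|H]; by left; apply: map_f.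
Qed.

Lemma uniq_allw n : uniq (allw n).
Proof.
elim: n => [|n IH] //=; rewrite cat_uniq !map_inj_uniq //; try by move=> ? ? [].
rewrite IH andbT /=; apply/hasPn => w /mapP [w' _ ->]; apply/mapP => -[? _ //].
Qed.


Definition consf (T : finType) m (x : T) (g : {ffun 'I_m -> T}) : {ffun 'I_m.+1 -> T} :=
  [ffun i => if unlift ord0 i is Some j then g j else x].

Lemma sum_consf (T : finType) m (F : {ffun 'I_m.+1 -> T} -> nat) :
  \sum_f F f = \sum_x \sum_(g : {ffun 'I_m -> T}) F (consf x g).
Proof.
rewrite pair_bigA /= (reindex (fun p : T * {ffun 'I_m -> T} => consf p.1 p.2)) //.
apply: onW_bij.
exists (fun f : {ffun 'I_m.+1 -> T} => (f ord0, [ffun j => f (lift ord0 j)])).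
- move=> [x g] /=; congr (_, _); first by rewrite /consf ffunE unlift_none.
  by apply/ffunP => j; rewrite !ffunE liftK.
- move=> f; apply/ffunP => i; rewrite /consf ffunE.
  by case: unliftP => [j ->|->]; rewrite ?ffunE.
Qed.

Lemma nth_map_sub (cs : seq nat) x l : nth 0 (map (subn^~ x) cs) l = nth 0 cs l - x.
Proof. by elim: cs l => [|c cs IH] [|l] //=. Qed.

Lemma consf0 (T : finType) m (x : T) (g : {ffun 'I_m -> T}) : consf x g ord0 = x.
Proof. by rewrite /consf ffunE unlift_none. Qed.

Lemma consfS (T : finType) m (x : T) (g : {ffun 'I_m -> T}) j : consf x g (lift ord0 j) = g j.
Proof. by rewrite /consf ffunE liftK. Qed.

Lemma sum_lt_ord0 m n (F : 'I_m -> nat) : \sum_(k < m | k < @ord0 n) F k = 0.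
Proof. by rewrite big_pred0. Qed.

Lemma sum_le_recl m (F : 'I_m.+1 -> nat) (l : nat) :
  \sum_(k < m.+1 | k <= l) F k = F ord0 + \sum_(k < m | k < l) F (lift ord0 k).
Proof. by rewrite big_mkcond big_ord_recl /= [in RHS]big_mkcond. Qed.

Lemma G_ffun m K as_ cs q :
  size as_ = m -> size cs = m -> all (fun x => 0 < x) as_ -> sorted leq cs ->
  all (fun x => x <= q) cs -> q <= K ->
  G as_ cs q =
  \sum_(t : {ffun 'I_m -> 'I_K.+1} |
          [forall l : 'I_m, \sum_(k < m | k <= l) (t k : nat) <= nth 0 cs l])
     \prod_(j < m) 'C(nth 0 as_ j + t j - 1, t j).
Proof.
elim: m as_ cs q => [|m IH] as_ cs q.
  case: as_ => // _ _ _ _ _ _ /=.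
  rewrite (eq_bigl xpredT); last by move=> t; apply/forallP => -[].
  rewrite (eq_bigr (fun _ => 1)); last by move=> t _; rewrite big_ord0.
  rewrite sum1_card; have := card_ffun 'I_0 'I_K.+1; rewrite !card_ord expn0 => <-.
  by apply: eq_card.
case: as_ => // a as'; case: cs => // c cs' [Ha] [Hc] /andP[a0 Hpos] Hs /andP[cq Hq] qK.
have Hcs' : all (leq c) cs' by apply: order_path_min Hs; apply: leq_trans.
rewrite big_mkcond sum_consf /=.
transitivity (\sum_(x : 'I_K.+1 | x <= c) 'C(a + x - 1, x) *
   \sum_(g : {ffun 'I_m -> 'I_K.+1} |
          [forall l : 'I_m, \sum_(k < m | k <= l) (g k : nat) <= nth 0 (map (subn^~ x) cs') l])
     \prod_(j < m) 'C(nth 0 as' j + g j - 1, g j)); last first.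
  rewrite big_mkcond /=; apply: eq_bigr => x _.
  rewrite big_distrr /= -big_mkcondl /=.
  case: ifP => xc; last first.
    rewrite big1 // => g; rewrite andbC; case: forallP => //= H _.
    by move: xc; have := H ord0; rewrite sum_le_recl sum_lt_ord0 (consf0 x g) addn0 /= => ->.
  apply: eq_big => g.
  - apply/forallP/andP => [H | [/forallP H _]].
    + split => //; apply/forallP => l.
      case: (unliftP ord0 l) => [l' ->|->]; last first.
        by rewrite sum_le_recl sum_lt_ord0 (consf0 x g) addn0.
      have := H l'; rewrite sum_le_recl (consf0 x g) /= nth_map_sub.
      rewrite leq_subRL; last first.
        apply: leq_trans xc _; have : l' < size cs' by rewrite Hc.
        by move/(all_nthP 0 Hcs').
      congr (_ + _ <= _); apply: eq_big => i; first by [].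
      by rewrite (consfS x g).
    + move=> l; have := H (lift ord0 l); rewrite sum_le_recl (consf0 x g) /= nth_map_sub.
      rewrite leq_subRL; last first.
        apply: leq_trans xc _; have : l < size cs' by rewrite Hc.
        by move/(all_nthP 0 Hcs').
      congr (_ + _ <= _); apply: eq_big => i; first by [].
      by rewrite (consfS x g).
  - move=> _; rewrite big_ord_recl (consf0 x g) /=; congr (_ * _).
    by apply: eq_bigr => i _; rewrite (consfS x g).
rewrite (big_ord_widen K.+1 (fun i => 'C(a.-1 + i, i) * G as' [seq x - i | x <- cs'] (q - i)));
  last by rewrite ltnS (leq_trans cq qK).
apply: eq_big => x; first by rewrite ltnS.
move=> xc; rewrite -(prednK a0) addSn subn1 /=; congr (_ * _).
apply: IH => //.
- by rewrite size_map.
- rewrite sorted_map; apply: sub_sorted (path_sorted Hs) => u v /= uv.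
  by rewrite leq_sub2r.
- by rewrite all_map; apply: sub_all Hq => u /= uq; rewrite leq_sub2r.
- by apply: leq_trans (leq_subr _ _) qK.
Qed.


Fixpoint bi (as_ : seq nat) (f : nat) : nat :=
  if as_ is a :: as' then (if f < a then 0 else (bi as' (f - a)).+1) else 0.

Definition pcond (as_ cs : seq nat) (w : seq bool) (y : nat) : bool :=
  nth false w y ==> (count negb (take y w) < sumn as_) ==>
  (count id (take y w) < nth 0 cs (bi as_ (count negb (take y w)))).

Definition okg (as_ cs : seq nat) (w : seq bool) : bool :=
  (count negb w == sumn as_) && all (pcond as_ cs w) (iota 0 (size w)).

Lemma all_iotaS (P : pred nat) m n : all P (iota m.+1 n) = all (fun y => P y.+1) (iota m n).
Proof. by elim: n m => [|n IH] m //=; rewrite IH. Qed.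

Lemma nth_map_pred (cs : seq nat) l : nth 0 (map predn cs) l = (nth 0 cs l).-1.
Proof. by elim: cs l => [|c cs IH] [|l] //=. Qed.

Lemma okw_nil cs w : okw [::] cs w = okg [::] cs w.
Proof.
rewrite /okg /=.
have -> : all (pcond [::] cs w) (iota 0 (size w)).
  by apply/allP => y _; rewrite /pcond /= implybT.
rewrite andbT; case: w => [|x w] //=.
by elim: w x => [|y w IH] [|] //=; rewrite IH.
Qed.

Lemma okw_okg as_ cs w : all (fun x => 0 < x) as_ -> okw as_ cs w = okg as_ cs w.
Proof.
elim: w as_ cs => [|x w IH] as_ cs Hpos.
  case: as_ Hpos => [|a as'] /=; first by rewrite /okg.
  by case/andP => a0 _; rewrite /okg /= andbT eq_sym; case: a a0.
case: as_ Hpos => [|a as'] Hpos; first by rewrite okw_nil.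
have /andP[a0 Hpos'] := Hpos.
rewrite /okg [size _]/= /= all_iotaS.
case: x.
- rewrite IH // /okg.
  have -> : pcond (a :: as') cs (true :: w) 0 = (0 < head 0 cs).
    by rewrite /pcond /= a0 addn_gt0 a0 /=; case: (cs).
  rewrite andbCA; congr (_ && (_ && _)).
  apply: eq_all => y; rewrite /pcond /= nth_map_pred ltn_predRL.
  by [].
- case: ifP => a1.
  + have a1' : a = 1 by apply/eqP; rewrite eqn_leq a1.
    subst a; rewrite IH // /okg /= add1n eqSS.
    congr (_ && _); apply: eq_all => y; rewrite /pcond /=.
    rewrite !add1n ltnS add0n subSS subn0.
    by case: (cs) => [|c cs'] //=; rewrite nth_nil.
  + have a2 : 0 < a.-1 by rewrite -ltnS prednK // ltnNge a1.
    rewrite IH /=; last by rewrite a2.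
    rewrite /okg /=.
    congr (_ && _).
      by rewrite -{2}(prednK a0) addSn eqSS.
    apply: eq_all => y; rewrite /pcond /= add0n add1n.
    set F := count negb _.
    have E1 : F.+1 < a = (F < a.-1) by rewrite -{1}(prednK a0).
    have E2 : F.+1 < a + sumn as' = (F < a.-1 + sumn as') by rewrite -{1}(prednK a0).
    have E3 : F.+1 - a = F - a.-1 by rewrite -{1}(prednK a0).
    by rewrite E1 E2 E3.
Qed.


Lemma perm_count_mem (T : eqType) (s1 s2 : seq T) :
  (forall x, count_mem x s1 = count_mem x s2) -> perm_eq s1 s2.
Proof.
elim: s1 s2 => [|x s1 IH] s2 H.
  case: s2 H => // z s2 H; have := H z; by rewrite /= eqxx.
have xs2 : x \in s2 by rewrite -has_pred1 has_count -H /= eqxx.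
apply: (@perm_trans _ (x :: rem x s2)); last by rewrite perm_sym; apply: perm_to_rem.
rewrite perm_cons; apply: IH => y.
have := H y; have /permP P := perm_to_rem xs2.
by rewrite P /= => /eqP; rewrite eqn_add2l => /eqP.
Qed.

Lemma index_filter (T : eqType) (Q : pred T) (e : seq T) x :
  uniq e -> x \in e -> Q x -> index x (filter Q e) = count Q (take (index x e) e).
Proof.
elim: e => [|y e IH] //= /andP[ye ue]; rewrite in_cons => xe Qx.
case: (eqVneq y x) => [->|yx]; first by rewrite Qx /= eqxx.
have xe' : x \in e by move: xe; rewrite eq_sym (negbTE yx).
case: ifP => Qy /=; first by rewrite (negbTE yx) IH // Qy.
by rewrite IH // Qy.
Qed.

Lemma count_bi l c : count (fun k => bi l k == c) (iota 0 (sumn l)) = nth 0 l c.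
Proof.
elim: l c => [|x l IH] c /=; first by rewrite nth_nil.
rewrite iotaD count_cat add0n.
have -> : iota x (sumn l) = map (addn x) (iota 0 (sumn l)) by rewrite -iotaDl addn0.
rewrite count_map.
have -> : count (fun k => bi (x :: l) k == c) (iota 0 x) = (c == 0) * x.
  rewrite (eq_in_count (a2 := fun _ => c == 0)).
    have E : forall s : seq nat, count (fun _ => c == 0) s = (c == 0) * size s.
      by elim => [|? ? /= ->]; rewrite ?muln0 ?mulnS.
    by rewrite E size_iota.
  by move=> k; rewrite mem_iota /= add0n => -> /=; rewrite eq_sym.
rewrite (eq_count (a2 := fun k => (bi l k).+1 == c)); last first.
  by move=> k /=; rewrite ltnNge leq_addr /= addKn.
case: c => [|c]; first by rewrite mul1n (eq_count (a2 := pred0)) ?count_pred0 ?addn0.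
by rewrite mul0n add0n /= -IH.
Qed.

Lemma bi_mono l k k' : k <= k' -> bi l k <= bi l k'.
Proof.
elim: l k k' => [|x l IH] k k' //= kk.
case: ifP => // kx.
have -> : (k' < x) = false by apply/negbTE; rewrite -leqNgt (leq_trans _ kk) // leqNgt kx.
by rewrite ltnS IH // leq_sub2r.
Qed.

Lemma bi_lt l k i : k < sumn l -> (bi l k < i) = (k < sumn (take i l)).
Proof.
elim: l k i => [|x l IH] k i //= kl.
case: i => [|i] /=; first by rewrite ltn0.
case: ifP => kx; first by rewrite ltn_addr.
rewrite ltnS IH; last by rewrite ltn_subLR // leqNgt kx.
by rewrite ltn_subLR // leqNgt kx.
Qed.

Lemma bi_lt_size l k : k < sumn l -> bi l k < size l.
Proof. by move=> kl; rewrite bi_lt // take_size. Qed.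

Lemma map_index_uniq (T : eqType) (s : seq T) : uniq s -> map (index^~ s) s = iota 0 (size s).
Proof.
move=> us; case: s us => [|x0 s'] // us.
apply: (@eq_from_nth _ 0); first by rewrite size_map size_iota.
move=> i; rewrite size_map => Hi.
by rewrite (nth_map x0) // nth_iota // index_uniq.
Qed.

Lemma count_take_mono (T : Type) (p : pred T) (s : seq T) y x :
  y <= x -> count p (take y s) <= count p (take x s).
Proof.
move=> yx; rewrite -(subnKC yx) takeD count_cat leq_addr //.
Qed.

Lemma count_take_lt (T : Type) (p : pred T) (s : seq T) x0 x :
  x < size s -> p (nth x0 s x) -> count p (take x s) < count p s.
Proof.
move=> xs px; rewrite -{2}(cat_take_drop x s) count_cat (drop_nth x0 xs) /= px.
by rewrite addnA addn1 ltnS leq_addr.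
Qed.


Lemma sum_nth_take (s : seq nat) n : \sum_(j < n) nth 0 s j = sumn (take n s).
Proof.
elim: s n => [|x s IH] [|n] //=; rewrite ?big_ord0 //.
  by rewrite big1 // => j _; rewrite nth_nil.
by rewrite big_ord_recl /= IH.
Qed.

Lemma sumn_mkseq (F : nat -> nat) n : sumn (mkseq F n) = \sum_(j < n) F j.
Proof. by rewrite sumnE big_map -(big_mkord xpredT) /index_iota subn0. Qed.

Lemma card_count (T : finType) (A : pred T) : #|A| = count A (enum T).
Proof. by rewrite cardE enumT -size_filter /enum_mem. Qed.

Section SVT.
Variables (n1 n2 : nat) (a b : seq nat).
Hypotheses (Hn : n2 <= n1) (Hn1 : 2 <= n1) (Ha : size a = n1) (Hb : size b = n2)
  (Hapos : all (fun x => 0 < x) a) (Hbpos : all (fun x => 0 < x) b).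

Local Notation lam := [:: n1; n2].
Definition rhof (i j : nat) := if i == 0 then nth 0 a j else nth 0 b j.
Local Notation N := (dens_total lam rhof).

Lemma N_eq : N = sumn a + sumn b.
Proof.
rewrite /dens_total.
rewrite -(pair_big_dep xpredT (fun (i : 'I_2) (j : 'I_n1) => in_shape lam i j) (fun i j => rhof i j)) /=.
rewrite big_ord_recl big_ord_recl big_ord0 addn0 /=.
congr (_ + _).
  rewrite /in_shape /= (eq_bigl xpredT) ?sum_nth_take -?Ha ?take_size //.
  by move=> j; rewrite ltn_ord.
rewrite /in_shape /= -(big_ord_widen n1 (fun j => nth 0 b j)) //.
by rewrite sum_nth_take -Hb take_size.
Qed.


Definition rl (r : bool) : seq nat := if r then mkseq (nth 0 b) n1 else a.

Lemma size_rl r : size (rl r) = n1.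
Proof. by case: r; rewrite /rl ?size_mkseq. Qed.

Lemma sumn_rl r : sumn (rl r) = if r then sumn b else sumn a.
Proof.
by case: r => //=; rewrite sumn_mkseq sum_nth_take take_oversize // Hb.
Qed.

Lemma nth_rl (r : bool) c : c < n1 -> nth 0 (rl r) c = rhof r c.
Proof. by case: r => cn /=; rewrite /rhof //= nth_mkseq. Qed.

Definition cs0 := mkseq (fun j => sumn (take j (rl true))) n1.

Definition rank (s : seq bool) (x : nat) := count (pred1 (nth false s x)) (take x s).

Definition Ls (s : seq bool) (r : bool) : seq 'I_N := [seq x : 'I_N <- enum 'I_N | nth false s x == r].

Lemma count_take_enum (s : seq bool) (r : bool) k : size s = N ->
  count (fun y : 'I_N => nth false s y == r) (take k (enum 'I_N)) = count (pred1 r) (take k s).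
Proof.
move=> sN.
rewrite -(count_map (nth false s \o val) (pred1 r)) map_take map_comp val_enum_ord.
by rewrite -sN -/(mkseq _ _) mkseq_nth.
Qed.

Lemma Ls_index s r (x : 'I_N) : size s = N -> nth false s x = r -> index x (Ls s r) = rank s x.
Proof.
move=> sN xr; rewrite /Ls index_filter ?enum_uniq ?mem_enum ?xr //.
by rewrite index_enum_ord count_take_enum // /rank xr.
Qed.

Lemma size_Ls s r : size s = N -> size (Ls s r) = count (pred1 r) s.
Proof.
move=> sN; rewrite size_filter -(take_size (enum 'I_N)) count_take_enum //.
by rewrite size_enum_ord -sN take_size.
Qed.

Lemma uniq_Ls s r : uniq (Ls s r).
Proof. by rewrite filter_uniq ?enum_uniq. Qed.

Lemma mem_Ls s r x : (x \in Ls s r) = (nth false s x == r).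
Proof. by rewrite mem_filter mem_enum andbT. Qed.


Definition o0 : 'I_n1 := Ordinal (leq_trans (isT : 0 < 2) Hn1).

Definition build (s : seq bool) : {ffun 'I_N -> cellT lam} :=
  [ffun x : 'I_N => ((inord (nth false s x) : 'I_2), insubd o0 (bi (rl (nth false s x)) (rank s x)))].

Definition wordf (f : {ffun 'I_N -> cellT lam}) : seq bool :=
  [seq (((f x).1 : nat) != 0) | x : 'I_N <- enum 'I_N].

Lemma size_wordf f : size (wordf f) = N.
Proof. by rewrite size_map size_enum_ord. Qed.

Lemma nth_wordf f (x : 'I_N) : nth false (wordf f) x = (((f x).1 : nat) != 0).
Proof.
rewrite (nth_map x) ?size_enum_ord //; congr (_ != 0).
by have -> : nth x (enum 'I_N) x = x by apply: val_inj; rewrite /= nth_enum_ord.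
Qed.

Lemma build_row s (x : 'I_N) : ((build s x).1 : nat) = nth false s x.
Proof. by rewrite ffunE /= inordK //; case: (nth _ _ _). Qed.

Lemma build_col s (x : 'I_N) : rank s x < sumn (rl (nth false s x)) ->
  ((build s x).2 : nat) = bi (rl (nth false s x)) (rank s x).
Proof.
move=> H; rewrite ffunE /= val_insubd.
by have := bi_lt_size H; rewrite size_rl => ->.
Qed.

Lemma rank_lt s x : x < size s -> rank s x < count (pred1 (nth false s x)) s.
Proof. by move=> xs; apply: count_take_lt => //=. Qed.

Lemma wordf_build s : size s = N -> wordf (build s) = s.
Proof.
move=> sN; apply: (@eq_from_nth _ false); first by rewrite size_wordf.
move=> i; rewrite size_wordf => iN.
have -> : i = Ordinal iN by [].
by rewrite nth_wordf build_row; case: (nth _ _ _).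
Qed.


Section IsSVT.
Variable f : {ffun 'I_N -> cellT lam}.
Hypothesis Hf : is_SVT lam rhof f.

Lemma svt_shape x : in_shape lam (f x).1 (f x).2.
Proof. by case/and4P: Hf => /forallP H _ _ _; apply: H. Qed.

Lemma svt_card (c : cellT lam) : in_shape lam c.1 c.2 -> #|[set x | f x == c]| = rhof c.1 c.2.
Proof. by case/and4P: Hf => _ /forallP H _ _ /(implyP (H c)) /eqP. Qed.

Lemma svt_row x y : ((f y).1 : nat) = (f x).1 -> ((f y).2 : nat) = (f x).2 .+1 -> x < y.
Proof.
case/and4P: Hf => _ _ /forallP H _ e1 e2.
by have /forallP/(_ y)/implyP := H x; apply; rewrite e1 e2 !eqxx.
Qed.

Lemma svt_col x y : ((f y).1 : nat) = (f x).1 .+1 -> ((f y).2 : nat) = (f x).2 -> x < y.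
Proof.
case/and4P: Hf => _ _ _ /forallP H e1 e2.
by have /forallP/(_ y)/implyP := H x; apply; rewrite e1 e2 !eqxx.
Qed.

Lemma rho_pos (r c : nat) : in_shape lam r c -> r < 2 -> 0 < rhof r c.
Proof.
rewrite /in_shape /rhof; case: r => [|[|]] //= cn _.
  by apply: (all_nthP 0 Hapos); rewrite Ha.
by apply: (all_nthP 0 Hbpos); rewrite Hb.
Qed.

Lemma svt_exists (c : cellT lam) : in_shape lam c.1 c.2 -> exists y, f y = c.
Proof.
move=> cs; have := rho_pos cs (ltn_ord c.1); rewrite -svt_card // card_gt0.
by case/set0Pn => y; rewrite inE => /eqP; exists y.
Qed.

Lemma svt_chain x z : ((f x).1 : nat) = (f z).1 -> ((f x).2 : nat) < (f z).2 -> x < z.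
Proof.
move=> er /subnKC; set d := _ - _; move: d => d.
elim: d z er => [|d IH] z er ez.
  by apply: svt_row; rewrite ?er // -ez addn0.
have zn : ((f z).2 : nat).-1 < n1 by apply: leq_ltn_trans (leq_pred _) (ltn_ord (f z).2).
have sh : in_shape lam (f z).1 (Ordinal zn).
  apply: leq_ltn_trans (leq_pred _) _; exact: svt_shape.
have [y fy] := @svt_exists ((f z).1, Ordinal zn) sh.
apply: (@ltn_trans y).
  apply: IH; first by rewrite fy.
  by rewrite fy /= -ez addnS.
by apply: svt_row; rewrite fy //= prednK // -ez.
Qed.


Local Notation s := (wordf f).

Lemma row_lt2 (y : 'I_N) : ((f y).1 : nat) < 2.
Proof. exact: ltn_ord. Qed.

Lemma rowb_eq (y : 'I_N) (r : bool) : ((((f y).1 : nat) != 0) == r) = (((f y).1 : nat) == r).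
Proof. by have := row_lt2 y; case: ((f y).1 : nat) => [|[|]] //; case: r. Qed.

Lemma row_eq (y z : 'I_N) : nth false s y = nth false s z -> ((f y).1 : nat) = (f z).1.
Proof.
rewrite !nth_wordf; have := row_lt2 y; have := row_lt2 z.
by case: ((f y).1 : nat) => [|[|]] //; case: ((f z).1 : nat) => [|[|]].
Qed.

Lemma count_col (r : bool) c :
  count (fun y : 'I_N => ((f y).2 : nat) == c) (Ls s r) = nth 0 (rl r) c.
Proof.
rewrite count_filter -card_count.
case: (ltnP c n1) => cn; last first.
  rewrite (nth_default 0 (s := rl r)); last by rewrite size_rl.
  apply: eq_card0 => y /=.
  by apply/negbTE; rewrite negb_and; apply/orP; left; rewrite neq_ltn (leq_trans (ltn_ord _) cn).
have r2 : (r : nat) < 2 by case: r.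
case: (boolP (in_shape lam r (Ordinal cn))) => sh.
  have := @svt_card ((inord r : 'I_2), Ordinal cn); rewrite /= inordK //.
  rewrite nth_rl // => /(_ sh) <-; apply: eq_card => y; rewrite !inE /=.
  by rewrite nth_wordf rowb_eq [f y]surjective_pairing xpair_eqE andbC -!val_eqE /= inordK.
case: r sh {r2} => sh; last by move: sh; rewrite /in_shape /= cn.
rewrite /rl nth_mkseq // (nth_default 0 (s := b)); last by rewrite Hb; move: sh; rewrite /in_shape /= -leqNgt.
apply: eq_card0 => y /=; apply/negbTE/negP => /andP[/eqP yc].
rewrite nth_wordf rowb_eq => /eqP y1.
have := svt_shape y; rewrite /in_shape y1 /= yc.
by move: sh; rewrite /in_shape /= => /negbTE ->.
Qed.

Lemma sorted_Ls s' r : sorted (fun y z : 'I_N => y < z) (Ls s' r).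
Proof.
apply: sorted_filter; first by move=> y x z; apply: ltn_trans.
by have := iota_ltn_sorted 0 N; rewrite -val_enum_ord sorted_map.
Qed.

Lemma col_seq (r : bool) :
  map (fun y => ((f y).2 : nat)) (Ls s r) = map (bi (rl r)) (iota 0 (sumn (rl r))).
Proof.
apply: (sorted_eq leq_trans anti_leq).
- rewrite sorted_map; apply: (sub_in_sorted (P := mem (Ls s r))) (sorted_Ls s r).
  + move=> y z yL zL /= yz; rewrite leqNgt; apply/negP => lt.
    have zy : z < y.
      apply: svt_chain lt; apply: row_eq.
      by move: yL zL; rewrite !mem_Ls => /eqP -> /eqP ->.
    by move: (ltn_trans yz zy); rewrite ltnn.
  + by apply/allP => y.
- rewrite sorted_map; apply: sub_sorted (iota_sorted 0 _) => k k'; exact: bi_mono.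
- apply: perm_count_mem => c; rewrite !count_map.
  rewrite (eq_count (a2 := fun y : 'I_N => ((f y).2 : nat) == c)) ?count_col; last by move=> y; rewrite /= eq_sym.
  rewrite -count_bi; apply: eq_count => k /=; by rewrite eq_sym.
Qed.

Lemma svt_colK (x : 'I_N) :
  rank s x < sumn (rl (nth false s x)) /\ ((f x).2 : nat) = bi (rl (nth false s x)) (rank s x).
Proof.
set r := nth false s x.
have xL : x \in Ls s r by rewrite mem_Ls.
have sz : size (Ls s r) = sumn (rl r).
  by rewrite -(size_map (fun y => ((f y).2 : nat))) col_seq size_map size_iota.
have ix : index x (Ls s r) < sumn (rl r) by rewrite -sz index_mem.
rewrite -(@Ls_index _ r) ?size_wordf //; split => //.
have := congr1 (fun l => nth 0 l (index x (Ls s r))) (col_seq r) => /=.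
by rewrite (nth_map x) ?index_mem // nth_index // (nth_map 0) ?size_iota // nth_iota.
Qed.

Lemma svt_build : build s = f.
Proof.
apply/ffunP => x.
have e1 : (build s x).1 = (f x).1.
  apply: val_inj; rewrite /= build_row nth_wordf.
  by have := row_lt2 x; case: ((f x).1 : nat) => [|[|]].
have [Hr Hc] := svt_colK x.
have e2 : (build s x).2 = (f x).2 by apply: val_inj; rewrite /= build_col // Hc.
by rewrite [build s x]surjective_pairing [f x]surjective_pairing e1 e2.
Qed.

Lemma size_Ls_sumn r : size (Ls s r) = sumn (rl r).
Proof. by rewrite -(size_map (fun y => ((f y).2 : nat))) col_seq size_map size_iota. Qed.

Lemma row1 (y : 'I_N) : nth false s y -> ((f y).1 : nat) = 1.
Proof. by rewrite nth_wordf; have := row_lt2 y; case: ((f y).1 : nat) => [|[|]]. Qed.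

Lemma row0 (y : 'I_N) : ~~ nth false s y -> ((f y).1 : nat) = 0.
Proof. by rewrite nth_wordf; have := row_lt2 y; case: ((f y).1 : nat) => [|[|]]. Qed.

Lemma svt_okg : okg a cs0 s.
Proof.
apply/andP; split.
  rewrite (eq_count (a2 := pred1 false)); last by case.
  by rewrite -size_Ls ?size_wordf // size_Ls_sumn.
apply/allP => y; rewrite mem_iota add0n size_wordf => yN.
have -> : y = Ordinal yN by [].
set Y := Ordinal yN.
rewrite /pcond; apply/implyP => sy; apply/implyP => Fa.
set F := count negb (take Y s) in Fa *.
have [TY cY] := svt_colK Y.
rewrite sy in TY cY.
have -> : count id (take Y s) = rank s Y by rewrite /rank sy; apply: eq_count => -[].
have ja : bi a F < n1 by rewrite -Ha; apply: bi_lt_size.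
rewrite /cs0 nth_mkseq // -bi_lt //.
rewrite ltnNge; apply/negP => jc.
have FL : F < size (Ls s false) by rewrite size_Ls_sumn.
set z := nth Y (Ls s false) F.
have zL : z \in Ls s false by apply: mem_nth.
have zf : nth false s z = false by move: zL; rewrite mem_Ls => /eqP.
have [_ cz] := svt_colK z.
have rz : rank s z = F by rewrite -(@Ls_index _ false) ?size_wordf // index_uniq ?uniq_Ls.
rewrite zf rz /= in cz.
have yz : Y < z.
  rewrite ltnNge; apply/negP => zy.
  have zy' : z < Y by rewrite ltn_neqAle zy andbT; apply/negP => /eqP /val_inj ez; move: sy; rewrite -ez zf.
  have : count negb (take z.+1 s) <= F by apply: count_take_mono.
  rewrite (take_nth false) ?size_wordf // -cats1 count_cat zf /= addn1 ltnNge.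
  have -> : count negb (take z s) = F by rewrite -rz /rank zf; apply: eq_count => -[].
  by rewrite leqnn.
have rY := row1 sy.
have rz0 : ((f z).1 : nat) = 0 by apply: row0; rewrite zf.
move: jc; rewrite leq_eqVlt => /orP[/eqP ejc | ltjc].
  have : z < Y by apply: svt_col; rewrite ?rY ?rz0 // cY cz ejc.
  by rewrite ltnNge (ltnW yz).
have cYn : ((f Y).2 : nat) < n1 by exact: ltn_ord.
have sh : in_shape lam ((inord 0 : 'I_2) : nat) (Ordinal cYn) by rewrite inordK // /in_shape /=.
have [z' fz'] := @svt_exists ((inord 0 : 'I_2), Ordinal cYn) sh.
have zz' : z < z'.
  by apply: svt_chain; rewrite fz' /= ?inordK ?rz0 // cz cY.
have : z' < Y by apply: svt_col; rewrite fz' /= ?inordK ?rY.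
by move=> z'Y; move: (ltn_trans zz' z'Y); rewrite ltnNge (ltnW yz).
Qed.

End IsSVT.

Section Build.
Variable s : seq bool.
Hypotheses (sN : size s = N) (Hs : okg a cs0 s).

Lemma cnt_r (r : bool) : count (pred1 r) s = sumn (rl r).
Proof.
have cF : count (pred1 false) s = sumn a.
  by case/andP: Hs => /eqP <- _; apply: eq_count => -[].
case: r; rewrite sumn_rl //.
have := count_predC (pred1 true) s; rewrite sN N_eq.
have E : count (predC (pred1 true)) s = count (pred1 false) s by apply: eq_count => -[].
rewrite E cF.
by move/eqP; rewrite addnC eqn_add2l => /eqP.
Qed.

Lemma rank_bound (x : 'I_N) : rank s x < sumn (rl (nth false s x)).
Proof. by rewrite -cnt_r; apply: rank_lt; rewrite sN. Qed.

Lemma build_colB (x : 'I_N) : ((build s x).2 : nat) = bi (rl (nth false s x)) (rank s x).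
Proof. exact/build_col/rank_bound. Qed.

Lemma rank_mono (x y : 'I_N) : nth false s x = nth false s y -> (y : nat) <= x -> rank s y <= rank s x.
Proof. by rewrite /rank => ->; apply: count_take_mono. Qed.

Lemma build_svt : is_SVT lam rhof (build s).
Proof.
apply/and4P; split.
- apply/forallP => x; rewrite /in_shape build_row.
  case sx: (nth false s x) => /=; last exact: ltn_ord.
  rewrite build_colB sx bi_lt; last by have := rank_bound x; rewrite sx.
  have -> : take n2 (rl true) = b.
    rewrite /rl /mkseq -map_take take_iota (minn_idPl Hn) -Hb.
    by rewrite -/(mkseq _ _) mkseq_nth.
  by have := rank_bound x; rewrite sx sumn_rl.
- apply/forallP => c; apply/implyP => csh.
  have c1 : (c.1 : nat) < 2 by exact: ltn_ord.
  set r := (c.1 : nat) != 0.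
  have rc : (r : nat) = c.1 by rewrite /r; case: (c.1 : nat) c1 => [|[|]].
  rewrite -rc -nth_rl; last by exact: ltn_ord.
  have -> : #|[set x | build s x == c]| = count (fun x => build s x == c) (enum 'I_N).
    by rewrite cardsE card_count.
  rewrite (eq_count (a2 := fun x : 'I_N => (((build s x).2 : nat) == c.2) && (nth false s x == r))); last first.
    move=> x.
    have E : (build s x == c) = ((build s x).1 == c.1) && ((build s x).2 == c.2) by [].
    rewrite /= E andbC; congr (_ && _).
    rewrite -val_eqE /= build_row -rc.
    by case: (nth false s x); case: (r).
  rewrite -count_filter -/(Ls s r).
  rewrite (eq_in_count (a2 := fun x => bi (rl r) (index x (Ls s r)) == c.2)); last first.
    move=> x; rewrite mem_Ls => /eqP xr; rewrite /= build_colB xr Ls_index //.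
  rewrite -(count_map (index^~ (Ls s r)) (fun k => bi (rl r) k == c.2)) map_index_uniq ?uniq_Ls //.
  by rewrite size_Ls // cnt_r count_bi.
- apply/forallP => x; apply/forallP => y; apply/implyP => /andP[/eqP e1 /eqP e2].
  rewrite !build_row in e1.
  have e1' : nth false s y = nth false s x by move: e1; case: (nth _ _ _); case: (nth _ _ _).
  rewrite !build_colB e1' in e2.
  rewrite ltnNge; apply/negP => yx.
  have := bi_mono (rl (nth false s x)) (rank_mono (esym e1') yx).
  by rewrite e2 ltnn.
- apply/forallP => x; apply/forallP => y; apply/implyP => /andP[/eqP e1 /eqP e2].
  rewrite !build_row in e1.
  have sx : nth false s x = false by move: e1; case: (nth false s x); case: (nth _ _ _).
  have sy : nth false s y = true by move: e1; case: (nth false s x); case: (nth _ _ _).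
  rewrite !build_colB sx sy in e2.
  rewrite ltnNge; apply/negP => yx.
  have yx' : (y : nat) < x.
    by rewrite ltn_neqAle yx andbT; apply/negP => /eqP /val_inj eyx; move: sx; rewrite -eyx sy.
  case/andP: Hs => _ /allP /(_ y).
  rewrite mem_iota sN ltn_ord /= => /(_ isT).
  rewrite /pcond sy /=.
  have Fx : count negb (take y s) <= rank s x.
    rewrite /rank sx; rewrite (eq_count (a2 := pred1 false)); last by case.
    exact: count_take_mono (ltnW yx').
  have Fa : count negb (take y s) < sumn a.
    by apply: leq_ltn_trans Fx _; have := rank_bound x; rewrite sx.
  rewrite Fa /=.
  have ja : bi a (count negb (take y s)) < n1 by move: (bi_lt_size Fa); rewrite Ha.
  rewrite /cs0 nth_mkseq // -bi_lt; last first.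
    have := rank_bound y; rewrite sy /rank sy.
    by rewrite (eq_count (a1 := pred1 true) (a2 := id)) //; case.
  have -> : count id (take y s) = rank s y by rewrite /rank sy; apply: eq_count => -[].
  move=> H; have := leq_trans H (bi_mono a Fx).
  by rewrite -[bi a (rank s x)]/(bi (rl false) (rank s x)) -e2 ltnn.
Qed.

End Build.

Lemma svt_count_eq : SVT_count lam rhof = count (okg a cs0) (allw N).
Proof.
rewrite /SVT_count card_count -size_filter.
set E := [seq f <- enum {ffun 'I_N -> cellT lam} | is_SVT lam rhof f].
have memE f : (f \in E) = is_SVT lam rhof f by rewrite mem_filter mem_enum andbT.
rewrite -(size_map wordf) -size_filter.
apply: perm_size; apply: uniq_perm.
- rewrite map_inj_in_uniq; first by rewrite filter_uniq //; apply: enum_uniq.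
  move=> f g.
  rewrite !memE => Sf Sg e.
  by rewrite -(svt_build Sf) -(svt_build Sg) e.
- by rewrite filter_uniq ?uniq_allw.
- move=> w; rewrite mem_filter mem_allw; apply/mapP/andP => [[f]|[Hw /eqP sw]].
    by rewrite memE => Sf ->; rewrite size_wordf svt_okg.
  by exists (build w); rewrite ?memE ?build_svt ?wordf_build.
Qed.

Lemma cs0_sorted : sorted leq cs0.
Proof.
rewrite /cs0 /mkseq sorted_map; apply: sub_sorted (iota_sorted 0 n1) => j k /= jk.
by rewrite -(subnKC jk) takeD sumn_cat leq_addr.
Qed.

Lemma cs0_le : all (fun x => x <= sumn b) cs0.
Proof.
apply/allP => x /mapP [j _ ->]; rewrite -(sumn_rl true).
by rewrite -{2}(cat_take_drop j (rl true)) sumn_cat leq_addr.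
Qed.

Lemma nth_cs0 l : l.+1 < n1 ->
  nth 0 (behead cs0) l = \sum_(k < n1.-1 | k <= l) nth 0 b k.
Proof.
move=> ln; rewrite nth_behead /cs0 nth_mkseq // -sum_nth_take.
rewrite (big_ord_widen n1.-1 (fun k => nth 0 (rl true) k)); last by rewrite -ltnS prednK // (ltn_trans _ ln).
apply: eq_big => k; first by rewrite ltnS.
move=> _; rewrite /rl nth_mkseq //; apply: leq_trans (ltn_ord k) _; exact: leq_pred.
Qed.

Lemma main_eq :
  SVT_count lam rhof =
  \sum_(t : {ffun 'I_(n1.-1) -> 'I_(sumn b).+1}
          | dominated (n1.-1) (fun k => (t k : nat)) (fun k : 'I_(n1.-1) => nth 0 b k))
     \prod_(j < n1.-1) 'C(nth 0 a j.+1 + t j - 1, t j).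
Proof.
rewrite svt_count_eq (eq_count (a2 := okw a cs0)); last by move=> w; rewrite okw_okg.
rewrite (count_okw (q := sumn b)) //; last by rewrite N_eq.
  2: exact: cs0_le.
have [a0 [a' ea]] : exists a0 a', a = a0 :: a'.
  case Ea: a => [|a0 a']; last by exists a0, a'.
  by move: Hn1; rewrite -Ha Ea.
have n0 : 0 < n1 by apply: ltn_trans Hn1.
have ec : cs0 = 0 :: behead cs0.
  have h0 : nth 0 cs0 0 = 0 by rewrite /cs0 nth_mkseq // take0.
  have sz : 0 < size cs0 by rewrite size_mkseq.
  by move: h0 sz; case: (cs0) => //= x l ->.
set c' := behead cs0 in ec *.
rewrite {1}ea {1}ec /= big_ord1 bin0 mul1n subn0.
have -> : map (subn^~ 0) c' = c' by elim: (c') => //= x s ->; rewrite subn0.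
rewrite (@G_ffun (n1.-1) (sumn b) a' c' (sumn b)) //.
- apply: eq_big => t.
    rewrite /dominated; apply: eq_forallb => l; congr (_ <= _).
    by have := nth_cs0 (l := l); rewrite ec /= => ->; rewrite // -ltn_predRL.
  by move=> _; apply: eq_bigr => j _; rewrite ea.
- by rewrite -Ha ea.
- by rewrite /c' size_behead size_mkseq.
- by move: Hapos; rewrite ea => /andP[].
- by have := cs0_sorted; rewrite ec => /path_sorted.
- by have := cs0_le; rewrite ec => /andP[].
Qed.

End SVT.

Unset Implicit Arguments.

Theorem theorem7 (n1 n2 : nat) (a b : seq nat)
    (Hn : n2 <= n1) (Hn2 : 1 <= n2) (Hn1 : 2 <= n1)
    (Ha : size a = n1) (Hb : size b = n2)
    (Hapos : all (fun x => 0 < x) a) (Hbpos : all (fun x => 0 < x) b) :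
  SVT_count [:: n1; n2] (fun i j => if i == 0 then nth 0 a j else nth 0 b j) =
  \sum_(t : {ffun 'I_(n1.-1) -> 'I_(sumn b).+1}
          | dominated (n1.-1) (fun k => (t k : nat)) (fun k : 'I_(n1.-1) => nth 0 b k))
     \prod_(j < n1.-1) 'C(nth 0 a j.+1 + t j - 1, t j).
Proof.
exact: (@main_eq n1 n2 a b Hn Hn1 Ha Hb Hapos Hbpos).
Qed.
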